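(* Let $\{\ket{j}\}_{j=0}^{7}$ be the computational basis of three qubits, where $\ket{j}=\ket{j_1j_2j_3}$ with $j=4j_1+2j_2+j_3$, and let $$\ket{\psi_2}=\frac{1}{4\sqrt{2}}\left(\ket{0}+\ket{1}+\ket{2}+\ket{3}+\ket{4}+\ket{5}+\ket{6}+5\ket{7}\right),\qquad \rho_2=\ket{\psi_2}\bra{\psi_2}.$$ Denote by $A_2,B_2,C_2$ the first, second and third qubits of $\rho_2$. Then $$D(B_2C_2|A_2)=D(A_2C_2|B_2)=D(A_2B_2|C_2)=D(C_2|A_2B_2)=D(B_2|A_2C_2)=D(A_2|B_2C_2)$$ $$=-\tfrac{1}{8}(4+\sqrt{13})\log\left(\tfrac{1}{8}(4+\sqrt{13})\right)-\tfrac{1}{8}(4-\sqrt{13})\log\left(\tfrac{1}{8}(4-\sqrt{13})\right)\approx 0.28.$$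
   Context: Logarithms are base 2, and $S(\sigma)=-\mathrm{Tr}(\sigma\log\sigma)$ is the von Neumann entropy. For a state $\rho_{XY}$ on a bipartite system $X\otimes Y$ (here $X$ and $Y$ are complementary groups of the three qubits), the quantum discord with measurement on $X$ is $$D(Y|X)=\min_{\{E_a\}}\sum_a p_a S(\rho_{Y|a})+S(\rho_X)-S(\rho_{XY}),$$ where the minimum is over all POVMs $\{E_a\}$ on $X$ ($E_a\ge 0$, $\sum_a E_a=I$), $p_a=\mathrm{Tr}((E_a\otimes I)\rho_{XY})$, $\rho_{Y|a}=\mathrm{Tr}_X((E_a\otimes I)\rho_{XY})/p_a$, and $\rho_X,\rho_Y$ are reduced states. For example $D(B_2C_2|A_2)$ is the discord of $\rho_2$ viewed as a state on $A_2\otimes(B_2C_2)$ with measurement on $A_2$. *)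

(* Defs.v *)
From HB Require Import structures.
From mathcomp Require Import all_boot all_order all_algebra.
From mathcomp Require Import boolp classical_sets reals exp.
From mathcomp Require Import complex mxtens.
Set Implicit Arguments. Unset Strict Implicit. Unset Printing Implicit Defensive.
Import Order.TTheory GRing.Theory Num.Theory.
Local Open Scope ring_scope.
Local Open Scope classical_set_scope.

Section Quantum.
Variable R : realType.
Local Notation C := R[i].

Definition adj m n (A : 'M[C]_(m, n)) : 'M[C]_(n, m) := map_mx (fun z => z^*) A^T.

Definition unitary n (U : 'M[C]_n) : Prop := U *m adj U = 1%:M.

Definition psd n (E : 'M[C]_n) : Prop :=
  adj E = E /\ forall v : 'cV[C]_n, 0 <= (adj v *m E *m v) 0 0.

Definition log2 (x : R) : R := ln x / ln 2.

Definition eta (x : R) : R := if x == 0 then 0 else - (x * log2 x).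

(* von Neumann entropy S(s) = -Tr(s log s), computed through a spectral
   decomposition s = U diag(d) U^dagger (U unitary, d real): S(s) = sum_i eta(d_i). *)
Definition vN_entropy n (s : 'M[C]_n) : R :=
  xget 0 [set S | exists (U : 'M[C]_n) (d : 'I_n -> R),
           [/\ unitary U, s = U *m diag_mx (\row_i (d i)%:C%C) *m adj U
             & S = \sum_i eta (d i)]].

(* A state on X (x) Y with dim X = m, dim Y = n, Kronecker ordering (X first),
   index (i,j) |-> i*n + j  (mxtens_index). *)
Definition ptraceY m n (rho : 'M[C]_(m * n)) : 'M[C]_m :=
  \matrix_(i, i') \sum_(j < n) rho (mxtens_index (i, j)) (mxtens_index (i', j)).

Definition ptraceX m n (rho : 'M[C]_(m * n)) : 'M[C]_n :=
  \matrix_(j, j') \sum_(i < m) rho (mxtens_index (i, j)) (mxtens_index (i, j')).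

Definition povm m k (E : 'I_k -> 'M[C]_m) : Prop :=
  (forall a, psd (E a)) /\ \sum_(a < k) E a = 1%:M.

Definition meas_prob m n k (E : 'I_k -> 'M[C]_m) (rho : 'M[C]_(m * n)) (a : 'I_k) : R :=
  complex.Re (\tr ((E a *t (1%:M : 'M[C]_n)) *m rho)).

Definition post_state m n k (E : 'I_k -> 'M[C]_m) (rho : 'M[C]_(m * n)) (a : 'I_k)
  : 'M[C]_n :=
  ((meas_prob E rho a)%:C%C)^-1 *: ptraceX ((E a *t (1%:M : 'M[C]_n)) *m rho).

(* quantum discord D(Y|X) with measurement on the first factor X *)
Definition discord m n (rho : 'M[C]_(m * n)) : R :=
  inf [set v | exists k (E : 'I_k -> 'M[C]_m), povm E /\
         v = \sum_(a < k) meas_prob E rho a * vN_entropy (post_state E rho a)]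
  + vN_entropy (ptraceY rho) - vN_entropy rho.

(* three qubits: |j> = |j1 j2 j3>, j = 4 j1 + 2 j2 + j3; qubit k in {0,1,2}
   (0 = first qubit) carries the bit of weight 2^(2-k) *)
Definition qbit (k : 'I_3) (j : 'I_8) : nat := (j %/ 2 ^ (2 - k)) %% 2.

(* reordering of the qubits: new position k holds original qubit s k *)
Definition reidx (s : 'I_3 -> 'I_3) (j : 'I_8) : 'I_8 :=
  inord (\sum_(k < 3) qbit k j * 2 ^ (2 - s k)).

Definition reorder (s : 'I_3 -> 'I_3) (rho : 'M[C]_8) : 'M[C]_8 :=
  \matrix_(i, j) rho (reidx s i) (reidx s j).

Definition psi2 : 'cV[C]_8 :=
  \col_j ((if val j == 7%N then 5 else 1) / (4 * (Num.sqrt (2 : R))%:C%C)).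

Definition rho2 : 'M[C]_8 := psi2 *m adj psi2.

End Quantum.

Definition qA : 'I_3 := @Ordinal 3 0 isT.
Definition qB : 'I_3 := @Ordinal 3 1 isT.
Definition qC : 'I_3 := @Ordinal 3 2 isT.

Definition qord (a b c : 'I_3) : 'I_3 -> 'I_3 :=
  fun k => if val k == 0%N then a else if val k == 1%N then b else c.

(* Main.v *)
Require Import Defs.
From HB Require Import structures.
From mathcomp Require Import all_boot all_order all_algebra.
From mathcomp Require Import boolp classical_sets reals exp.
From mathcomp Require Import complex mxtens.
From mathcomp Require Import spectral sesquilinear.
From mathcomp Require Import ring lra.
Set Implicit Arguments. Unset Strict Implicit. Unset Printing Implicit Defensive.
Import Order.TTheory GRing.Theory Num.Theory.
Local Open Scope ring_scope.
Section G.
Variable R : realType.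
Local Notation C := R[i].
Local Open Scope sesquilinear_scope.

Lemma conjcE (x : C) : (x^*)%C = x^*.
Proof.
have [->|x0] := eqVneq x 0; first by rewrite conjc0 conjC0.
apply: (mulfI x0); by rewrite -sqr_normc normCK.
Qed.

Lemma adjE m n (A : 'M[C]_(m, n)) : adj A = A ^t*.
Proof. by rewrite /adj; apply/matrixP => i j; by rewrite !mxE. Qed.

Lemma adjM m n p (A : 'M[C]_(m, n)) (B : 'M[C]_(n, p)) : adj (A *m B) = adj B *m adj A.
Proof. by rewrite !adjE trmx_mul map_mxM. Qed.

Lemma adjK m n (A : 'M[C]_(m, n)) : adj (adj A) = A.
Proof. by rewrite !adjE trmxCK. Qed.

Lemma adjD m n (A B : 'M[C]_(m, n)) : adj (A + B) = adj A + adj B.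
Proof. by rewrite !adjE linearD /= map_mxD. Qed.

Lemma adjZ m n (c : C) (A : 'M[C]_(m, n)) : adj (c *: A) = c^* *: adj A.
Proof. by rewrite !adjE linearZ /= map_mxZ. Qed.

Lemma adj_scalar n (c : C) : adj (c%:M : 'M_n) = (c^*)%:M.
Proof. by rewrite adjE tr_scalar_mx map_scalar_mx. Qed.

Lemma unitaryC n (U : 'M[C]_n) : unitary U -> adj U *m U = 1%:M.
Proof. by move/mulmx1C. Qed.

Local Open Scope complex_scope.
Definition Dg n (d : 'I_n -> R) : 'M[C]_n := diag_mx (\row_i (d i)%:C).

Lemma DgM n (d e : 'I_n -> R) : Dg d *m Dg e = Dg (fun i => d i * e i).
Proof.
rewrite /Dg mul_diag_mx; apply/matrixP => i j; rewrite !mxE.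
by case: (i == j); rewrite ?mulr1n ?mulr0n ?mulr0 // rmorphM.
Qed.

Lemma DgD n (d e : 'I_n -> R) : Dg d + Dg e = Dg (fun i => d i + e i).
Proof.
rewrite /Dg; apply/matrixP => i j; rewrite !mxE.
by case: (i == j); rewrite ?mulr1n ?mulr0n ?addr0 // rmorphD.
Qed.

Lemma DgZ n (c : R) (d : 'I_n -> R) : c%:C *: Dg d = Dg (fun i => c * d i).
Proof.
rewrite /Dg; apply/matrixP => i j; rewrite !mxE.
by case: (i == j); rewrite ?mulr1n ?mulr0n ?mulr0 // rmorphM.
Qed.

Lemma DgN n (d : 'I_n -> R) : - Dg d = Dg (fun i => - d i).
Proof.
rewrite /Dg; apply/matrixP => i j; rewrite !mxE.
by case: (i == j); rewrite ?mulr1n ?mulr0n ?oppr0 // rmorphN.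
Qed.

Lemma Dg_entry n (d : 'I_n -> R) i : Dg d i i = (d i)%:C.
Proof. by rewrite /Dg !mxE eqxx mulr1n. Qed.

Lemma Dg_tr n (d : 'I_n -> R) : \tr (Dg d) = (\sum_i d i)%:C.
Proof. by rewrite /Dg mxtrace_diag rmorph_sum; apply: eq_bigr => i _; rewrite mxE. Qed.

Lemma Dg_inj n (d e : 'I_n -> R) : Dg d = Dg e -> forall i, d i = e i.
Proof. by move=> H i; move: (Dg_entry d i); rewrite H Dg_entry => /complexI. Qed.

Section Dec.
Variables (n : nat) (s U : 'M[C]_n) (d : 'I_n -> R).
Hypotheses (HU : unitary U) (Hs : s = U *m Dg d *m adj U).
Let HU' : U *m adj U = 1%:M. Proof. exact: HU. Qed.

Lemma dec_D : Dg d = adj U *m s *m U.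
Proof.
by rewrite Hs !mulmxA (unitaryC HU) mul1mx -mulmxA (unitaryC HU) mulmx1.
Qed.

Lemma dec_M (A B : 'M[C]_n) : (adj U *m A *m U) *m (adj U *m B *m U) = adj U *m (A *m B) *m U.
Proof. by rewrite !mulmxA -[adj U *m A *m U *m adj U]mulmxA HU' mulmx1. Qed.

Lemma dec_tr : (\sum_i d i)%:C = \tr s.
Proof. by rewrite -Dg_tr dec_D mxtrace_mulC mulmxA HU' mul1mx. Qed.

Lemma dec_tr2 : (\sum_i d i ^+ 2)%:C = \tr (s *m s).
Proof.
rewrite -Dg_tr; have -> : Dg (fun i => d i ^+ 2) = Dg d *m Dg d.
  by rewrite DgM; congr Dg; apply: funext => i; rewrite expr2.
by rewrite dec_D dec_M mxtrace_mulC !mulmxA HU' mul1mx.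
Qed.

Lemma dec_cubic (q : R) : s *m s *m s - s *m s + q%:C *: s = 0 ->
  forall i, d i ^+ 3 - d i ^+ 2 + q * d i = 0.
Proof.
move=> H i.
have : adj U *m (s *m s *m s - s *m s + q%:C *: s) *m U = 0 by rewrite H mulmx0 mul0mx.
rewrite mulmxDr mulmxDl mulmxBr mulmxBl -scalemxAr -scalemxAl.
rewrite -!dec_M -!dec_D DgM DgM DgN DgZ DgD DgD => /(congr1 (fun M : 'M[C]_n => M i i)).
rewrite Dg_entry mxE => /complexI H1; rewrite -[RHS]H1; ring.
Qed.

Lemma dec_idem : s *m s = s -> forall i, d i ^+ 2 = d i.
Proof.
move=> H i; have := dec_D; rewrite -H -dec_M -dec_D DgM.
by move/Dg_inj => /(_ i) E; rewrite expr2 -E.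
Qed.

End Dec.
Local Open Scope sesquilinear_scope.
Lemma decomp_exists n (s : 'M[C]_n) : adj s = s ->
  exists U (d : 'I_n -> R), unitary U /\ s = U *m Dg d *m adj U.
Proof.
move=> Hs.
have herm : s \is hermsymmx by rewrite is_hermitianmxE expr0 scale1r -adjE Hs.
have /orthomx_spectralP Es := hermitian_normalmx herm.
have Pu := spectral_unitarymx s.
have /mxOverP Hr := hermitian_spectral_diag_real herm.
exists ((spectralmx s)^t*), (fun i => complex.Re (spectral_diag s 0 i)).
split.
  rewrite /unitary adjE trmxCK; apply: mulmx1C; exact: (unitarymxP Pu).
rewrite adjE trmxCK -invmx_unitary // {1}Es; congr (_ *m _ *m _).
rewrite /Dg; congr diag_mx; apply/rowP => i; rewrite mxE RRe_real // (Hr 0 i). Qed.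
Local Close Scope sesquilinear_scope.

Lemma eta0 : Defs.eta (0 : R) = 0.
Proof. by rewrite /Defs.eta eqxx. Qed.

Lemma eta1 : Defs.eta (1 : R) = 0.
Proof. by rewrite /Defs.eta; case: ifP => _ //; rewrite /log2 ln1 mul0r mulr0 oppr0. Qed.

Lemma eta_ge0 (x : R) : 0 <= x -> x <= 1 -> 0 <= Defs.eta x.
Proof.
move=> x0 x1; rewrite /Defs.eta; case: eqP => // _.
rewrite oppr_ge0 /log2 mulr_ge0_le0 // mulr_le0_ge0 ?ln_le0 //.
by rewrite invr_ge0 ln_ge0 // ler1n.
Qed.

Definition decP n (s : 'M[C]_n) :=
  fun S : R => exists (U : 'M[C]_n) (d : 'I_n -> R),
           [/\ unitary U, s = U *m diag_mx (\row_i (d i)%:C) *m adj U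
             & S = \sum_i Defs.eta (d i)].

Lemma vN_ent_val n (s : 'M[C]_n) (V : R) :
  (exists U (d : 'I_n -> R), unitary U /\ s = U *m Dg d *m adj U) ->
  (forall U (d : 'I_n -> R), unitary U -> s = U *m Dg d *m adj U -> \sum_i Defs.eta (d i) = V) ->
  vN_entropy s = V.
Proof.
move=> [U [d [HU Hs]]] Hall; rewrite /vN_entropy.
have H : exists S, decP s S by exists (\sum_i Defs.eta (d i)), U, d.
have := xgetPex 0 H.
by move=> [U' [d' [HU' Hs' ->]]]; exact: (Hall U' d' HU' Hs').
Qed.

Lemma vN_ent_prop n (s : 'M[C]_n) (P : R -> Prop) : P 0 ->
  (forall U (d : 'I_n -> R), unitary U -> s = U *m Dg d *m adj U -> P (\sum_i Defs.eta (d i))) ->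
  P (vN_entropy s).
Proof.
move=> P0 Hall; rewrite /vN_entropy.
case: (pselect (exists S, decP s S)) => [/(xgetPex 0)|nex].
  by move=> [U' [d' [HU' Hs' ->]]]; exact: (Hall U' d' HU' Hs').
by rewrite xgetPN // => S HS; apply: nex; exists S.
Qed.

Lemma vN_idem n (s : 'M[C]_n) : s *m s = s -> vN_entropy s = 0.
Proof.
move=> Hss; apply: (@vN_ent_prop n s (fun x => x = 0)) => // U d HU Hs.
apply: big1 => i _; have := dec_idem HU Hs Hss i.
move=> E; have : d i * (d i - 1) = 0 by rewrite mulrBr mulr1 -expr2 E subrr.
move/eqP; rewrite mulf_eq0 subr_eq0.
by case/orP => /eqP ->; rewrite ?eta0 ?eta1.
Qed.
Lemma quad_col n (U s : 'M[C]_n) i :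
  (adj U *m s *m U) i i = (adj (col i U) *m s *m col i U) 0 0.
Proof.
rewrite !mxE; apply: eq_bigr => k _; rewrite !mxE; congr (_ * _).
by apply: eq_bigr => l _; rewrite !mxE.
Qed.

Definition psdq n (s : 'M[C]_n) := forall v : 'cV[C]_n, 0 <= (adj v *m s *m v) 0 0.

Lemma dec_ge0 n (s U : 'M[C]_n) (d : 'I_n -> R) : unitary U -> s = U *m Dg d *m adj U ->
  psdq s -> forall i, 0 <= d i.
Proof.
move=> HU Hs Hq i; have := Hq (col i U); rewrite -quad_col -(dec_D HU Hs) Dg_entry.
by rewrite ler0c.
Qed.

Lemma vN_ge0 n (s : 'M[C]_n) (t : R) : psdq s -> \tr s = t%:C -> t <= 1 ->
  0 <= vN_entropy s.
Proof.
move=> Hq Ht t1; apply: (@vN_ent_prop n s (fun x => 0 <= x)) => // U d HU Hs.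
have d0 := dec_ge0 HU Hs Hq.
have := dec_tr HU Hs; rewrite Ht => /complexI St.
apply: sumr_ge0 => i _; apply: eta_ge0 => //.
apply: le_trans t1; rewrite -St (bigD1 i) //= lerDl.
by apply: sumr_ge0 => j _.
Qed.
Definition cval : R :=
    - ((4 + Num.sqrt 13) / 8) * log2 ((4 + Num.sqrt 13) / 8)
    - ((4 - Num.sqrt 13) / 8) * log2 ((4 - Num.sqrt 13) / 8).

Lemma interp (a b ea eb : R) : a != 0 -> b != 0 -> a != b ->
  exists al be : R, al * a + be * a ^+ 2 = ea /\ al * b + be * b ^+ 2 = eb.
Proof.
move=> a0 b0 ab.
have ab' : a - b != 0 by rewrite subr_eq0.
exists (ea / a - (ea / a - eb / b) / (a - b) * a), ((ea / a - eb / b) / (a - b)).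
by split; field; rewrite ab' a0 b0.
Qed.

Lemma vN_c n (s : 'M[C]_n) : adj s = s ->
  s *m s *m s - s *m s + (3/64)%:C *: s = 0 -> \tr s = 1 -> \tr (s *m s) = (29/32)%:C ->
  vN_entropy s = cval.
Proof.
move=> Hh Hc Ht Ht2.
set r := Num.sqrt (13 : R).
have r2 : r ^+ 2 = 13 by rewrite sqr_sqrtr // ler0n.
have r0 : 0 < r by rewrite sqrtr_gt0 ltr0n.
have r4 : r < 4.
  have : r ^+ 2 < 4 ^+ 2 by rewrite r2 -natrX ltr_nat.
  by rewrite ltr_pXn2r // ?ltW // ?ltr0n // qualifE /= ltW.
set a := (4 + r) / 8; set b := (4 - r) / 8.
have a0 : a != 0 by rewrite /a mulf_neq0 // ?invr_eq0 ?pnatr_eq0 // gt_eqF // ltr_wpDl // ler0n.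
have b0 : b != 0 by rewrite /a mulf_neq0 // ?invr_eq0 ?pnatr_eq0 // gt_eqF // subr_gt0.
have ab : a != b.
  have E : a - b = r / 4 by rewrite /a /b; field.
  by rewrite -subr_eq0 E mulf_neq0 ?invr_eq0 ?pnatr_eq0 // gt_eqF.
have [al [be [Ha Hb]]] := interp (Defs.eta a) (Defs.eta b) a0 b0 ab.
have sab : a + b = 1 by rewrite /a /b; field.
have sab2 : a ^+ 2 + b ^+ 2 = 29 / 32.
  have -> : (a ^+ 2 + b ^+ 2)%R = (32 + 2 * r ^+ 2) / 64 by rewrite /a /b; field.
  by rewrite r2; field.
have Hcv : cval = al * (a + b) + be * (a ^+ 2 + b ^+ 2).
  rewrite mulrDr mulrDr addrACA Ha Hb /cval.
  by rewrite /Defs.eta (negPf a0) (negPf b0) -/a -/b !mulNr.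
have fac : forall x : R, x ^+ 3 - x ^+ 2 + 3 / 64 * x = x * (x - a) * (x - b).
  move=> x; have -> : (3 / 64 : R) = (16 - r ^+ 2) / 64 by rewrite r2; field.
  by rewrite /a /b; field.
have [U [d [HU Hs]]] := decomp_exists Hh.
apply: vN_ent_val; first by exists U, d.
move=> {HU Hs U d} U d HU Hs.
have Hd i : Defs.eta (d i) = al * d i + be * d i ^+ 2.
  have := dec_cubic HU Hs Hc i; rewrite fac => /eqP; rewrite !mulf_eq0 !subr_eq0.
  case/orP => [/orP [] | ] /eqP ->; rewrite ?Ha ?Hb //.
  by rewrite eta0 expr0n /= !mulr0 addr0.
have S1 : \sum_i d i = 1.
  by apply: complexI; rewrite (dec_tr HU Hs) Ht.
have S2 : \sum_i d i ^+ 2 = 29 / 32.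
  by apply: complexI; rewrite (dec_tr2 HU Hs) Ht2.
rewrite Hcv sab sab2 -S2 -[X in al * X]S1 mulr_sumr mulr_sumr -big_split /=.
by apply: eq_bigr => i _; rewrite Hd.
Qed.
Section Pure.
Variables (m n : nat) (phi : 'cV[C]_(m * n)).
Local Notation rho := (phi *m adj phi).

Definition Mx : 'M[C]_(m, n) := \matrix_(i, j) phi (mxtens_index (i, j)) 0.

Lemma sum_tens (F : 'I_(m * n) -> C) :
  \sum_k F k = \sum_i \sum_j F (mxtens_index (i, j)).
Proof.
rewrite pair_big (reindex (@mxtens_index m n)) /=.
  by apply: eq_bigr => -[i j].
by exists (@mxtens_unindex m n) => x _; rewrite (mxtens_indexK, mxtens_unindexK).
Qed.

Lemma rhoE a b : rho a b = phi a 0 * (phi b 0)^*.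
Proof. by rewrite !mxE big_ord1 !mxE. Qed.

Lemma ptraceY_pure : ptraceY rho = Mx *m adj Mx.
Proof.
apply/matrixP => i i'; rewrite !mxE; apply: eq_bigr => j _.
by rewrite rhoE !mxE.
Qed.

Lemma sum_delta (F : 'I_n -> C) j : \sum_k (1%:M : 'M[C]_n) j k * F k = F j.
Proof.
rewrite (bigD1 j) //= big1 ?addr0 => [|k /negPf kj]; rewrite !mxE.
  by rewrite eqxx mul1r.
by rewrite eq_sym kj mul0r.
Qed.

Lemma ptraceX_pure (E : 'M[C]_m) :
  ptraceX ((E *t (1%:M : 'M[C]_n)) *m rho) = (adj Mx *m E *m Mx)^T.
Proof.
apply/matrixP => j j'; rewrite !mxE.
under eq_bigr => i _ do rewrite !mxE sum_tens.
rewrite exchange_big /=; apply: eq_bigr => i' _.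
rewrite !mxE mulr_suml; apply: eq_bigr => i _.
under eq_bigr => j'' _ do rewrite tensmxE rhoE -mulrA (mulrC (E i i')) -mulrA.
rewrite sum_delta !mxE; ring.
Qed.

Lemma tr_ptraceX (N : 'M[C]_(m * n)) : \tr N = \tr (ptraceX N).
Proof.
rewrite /mxtrace sum_tens exchange_big /=; apply: eq_bigr => j _.
by rewrite mxE.
Qed.

Definition Kx (E : 'M[C]_m) := adj Mx *m E *m Mx.

Lemma meas_probE k (E : 'I_k -> 'M[C]_m) a :
  meas_prob E rho a = complex.Re (\tr (Kx (E a))).
Proof. by rewrite /meas_prob tr_ptraceX ptraceX_pure mxtrace_tr. Qed.

Lemma post_stateE k (E : 'I_k -> 'M[C]_m) a :
  post_state E rho a = ((complex.Re (\tr (Kx (E a))))%:C)^-1 *: (Kx (E a))^T.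
Proof. by rewrite /post_state ptraceX_pure meas_probE. Qed.

End Pure.

Lemma psdq_diag n (K : 'M[C]_n) j : psdq K -> 0 <= K j j.
Proof.
move=> /(_ (delta_mx j 0)).
have -> : adj (delta_mx j 0 : 'cV[C]_n) = (delta_mx 0 j : 'rV[C]_n).
  by apply/matrixP => x y; rewrite !mxE /= conjC_nat andbC.
by rewrite -rowE -colE !mxE.
Qed.

Lemma psdq_tr_ge0 n (K : 'M[C]_n) : psdq K -> 0 <= \tr K.
Proof. by move=> H; apply: sumr_ge0 => j _; apply: psdq_diag. Qed.

Lemma ge0_ReC (z : C) : 0 <= z -> ((complex.Re z)%:C = z) /\ 0 <= complex.Re z.
Proof.
move=> z0; split; first by apply: RRe_real; apply: ger0_real.
by move: z0; rewrite lecE => /andP [].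
Qed.

Lemma psdq_K m n (M : 'M[C]_(m, n)) (E : 'M[C]_m) : psd E -> psdq (adj M *m E *m M).
Proof.
move=> [_ HE] v; have := HE (M *m v).
by rewrite adjM !mulmxA.
Qed.

Lemma psdq_trmx n (K : 'M[C]_n) : psdq K -> psdq K^T.
Proof.
move=> H v; have := H (\col_i (v i 0)^*)%C.
have -> : (adj v *m K^T *m v) 0 0 = (adj (\col_i (v i 0)^*)%C *m K *m (\col_i (v i 0)^*)%C) 0 0.
  rewrite !mxE; under eq_bigr => k _ do rewrite !mxE mulr_suml.
  under [RHS]eq_bigr => k _ do rewrite !mxE mulr_suml.
  rewrite exchange_big /=; apply: eq_bigr => k _; apply: eq_bigr => l _.
  rewrite !mxE /= !conjcE conjCK; ring.
by [].
Qed.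

Lemma psdq_scale n (K : 'M[C]_n) (c : R) : 0 <= c -> psdq K -> psdq (c%:C *: K).
Proof.
move=> c0 H v; rewrite -scalemxAr -scalemxAl mxE.
by apply: mulr_ge0; rewrite ?ler0c //.
Qed.
Lemma adj_delta_col m (a : 'I_m) : adj (delta_mx a 0 : 'cV[C]_m) = (delta_mx 0 a : 'rV[C]_m).
Proof. by apply/matrixP => x y; rewrite !mxE /= conjC_nat andbC. Qed.

Section Pure2.
Variables (m n : nat) (phi : 'cV[C]_(m * n)).
Local Notation rho := (phi *m adj phi).

Lemma term_ge0 k (E : 'I_k -> 'M[C]_m) a : psd (E a) ->
  0 <= meas_prob E rho a * vN_entropy (post_state E rho a).
Proof.
move=> HE; rewrite meas_probE post_stateE.
have HK : psdq (Kx phi (E a)) := psdq_K (Mx phi) HE.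
have [tE t0] := ge0_ReC (psdq_tr_ge0 HK).
set t := complex.Re _ in tE t0 *.
apply: mulr_ge0 => //; apply: (@vN_ge0 _ _ (t^-1 * t)).
- by rewrite -fmorphV; apply: psdq_scale; rewrite ?invr_ge0 //; apply: psdq_trmx.
- by rewrite mxtraceZ mxtrace_tr -tE -fmorphV rmorphM.
- have [->|t0'] := eqVneq t 0; first by rewrite mulr0 ler01.
  by rewrite mulVf.
Qed.

Definition Edelta (a : 'I_m) : 'M[C]_m := delta_mx a a.

Lemma povm_delta : povm Edelta.
Proof.
split.
  move=> a; split.
    by apply/matrixP => x y; rewrite !mxE /= conjC_nat andbC.
  move=> v; rewrite /Edelta -(@mul_delta_mx _ m 1 m 0 a a) !mulmxA -mulmxA.
  rewrite -colE -rowE mxE big_ord1 !mxE /= mulrC; exact: mulcJ_ge0.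
apply/matrixP => i j; rewrite summxE (bigD1 i) //= big1 ?addr0.
  by rewrite !mxE eqxx /= eq_sym.
by move=> a /negPf ai; rewrite !mxE eq_sym ai.
Qed.

Lemma post_delta_idem a :
  let P := post_state Edelta rho a in P *m P = P.
Proof.
rewrite /= post_stateE.
have HK : psdq (Kx phi (Edelta a)) := psdq_K (Mx phi) ((povm_delta.1) a).
have [tE _] := ge0_ReC (psdq_tr_ge0 HK).
rewrite tE; set K := Kx phi (Edelta a); set T := \tr K.
set x := adj (delta_mx a 0 : 'cV[C]_m) *m Mx phi.
have KE : K = adj x *m x.
  rewrite /K /Kx /x adjM adjK /Edelta -(@mul_delta_mx _ m 1 m 0 a a) -adj_delta_col.
  by rewrite !mulmxA.
have TE : T = (x *m adj x) 0 0.
  by rewrite /T KE mxtrace_mulC /mxtrace big_ord1.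
have KK : K *m K = T *: K.
  rewrite KE mulmxA -(mulmxA (adj x)) [x *m adj x]mx11_scalar -TE.
  by rewrite mul_mx_scalar -scalemxAl.
rewrite -scalemxAl -scalemxAr scalerA -trmx_mul KK linearZ /= scalerA.
have [->|T0] := eqVneq T 0; first by rewrite invr0 !mul0r.
by rewrite -mulrA mulVf // mulr1.
Qed.

Lemma discord_pure : adj phi *m phi = 1%:M -> discord rho = vN_entropy (ptraceY rho).
Proof.
move=> Hphi; rewrite /discord.
have -> : vN_entropy rho = 0.
  by apply: vN_idem; rewrite mulmxA -(mulmxA phi) Hphi mulmx1.
match goal with |- inf ?X + _ - _ = _ => set S := X end.
have S0 : S 0.
  exists m, Edelta; split; first exact: povm_delta.
  rewrite big1 // => a _; rewrite vN_idem ?mulr0 //; exact: post_delta_idem.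
have Slb : lbound S 0.
  move=> v [k [E [[HE _] ->]]]; apply: sumr_ge0 => a _; exact: term_ge0.
have -> : inf S = 0.
  apply/eqP; rewrite eq_le; apply/andP; split.
    by apply: ge_inf => //; exists 0.
  by apply: lb_le_inf => //; exists 0.
by rewrite add0r subr0.
Qed.

End Pure2.
End G.
Section Conc.
Variable R : realType.
Local Notation C := R[i].
Local Open Scope complex_scope.

Definition w (k : nat) : R := if k == 7%N then 5 else 1.

Lemma psi2E (k : 'I_8) : psi2 R k 0 = (w k / (4 * Num.sqrt 2))%:C.
Proof.
rewrite mxE /w rmorphM rmorphV ?unitfE; last first.
  by rewrite mulf_neq0 ?pnatr_eq0 // gt_eqF // sqrtr_gt0 ltr0n.
rewrite rmorphM /= !rmorph_nat.
by case: (val k == 7%N); rewrite ?rmorph1 ?rmorph_nat.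
Qed.

Lemma psi_pair (k l : 'I_8) : psi2 R k 0 * (psi2 R l 0)^* = (w k * w l / 32)%:C.
Proof.
rewrite !psi2E -conjcE conjc_real -rmorphM; congr (_%:C).
have s0 : Num.sqrt (2 : R) != 0 by rewrite gt_eqF // sqrtr_gt0 ltr0n.
have s2 : Num.sqrt (2 : R) ^+ 2 = 2 by rewrite sqr_sqrtr // ler0n.
have -> : w k / (4 * Num.sqrt 2) * (w l / (4 * Num.sqrt 2)) = w k * w l / (16 * Num.sqrt 2 ^+ 2).
  by field; rewrite s0.
by rewrite s2; field.
Qed.

Lemma adj_entry m n (A : 'M[C]_(m, n)) i j : adj A i j = (A j i)^*%R.
Proof. by rewrite !mxE. Qed.

Lemma psi_norm : adj (psi2 R) *m psi2 R = 1%:M.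
Proof.
rewrite [LHS]mx11_scalar mxE.
under eq_bigr => k _ do rewrite adj_entry mulrC psi_pair.
rewrite -rmorph_sum !big_ord_recr big_ord0 /= /w /=.
congr (_%:M); have -> : (1 : C) = (1 : R)%:C by [].
by congr (_%:C); field.
Qed.
Definition bb (i j : 'I_2) : R :=
  if (val i == 1%N) && (val j == 1%N) then 7/8
  else if (val i == 0%N) && (val j == 0%N) then 1/8 else 1/4.
Definition Bm : 'M[C]_2 := \matrix_(i, j) (bb i j)%:C.

Lemma Bm_herm : adj Bm = Bm.
Proof.
apply/matrixP => i j; rewrite adj_entry !mxE -conjcE conjc_real; congr (_%:C).
by case: i => [[|[|i]] Hi] //; case: j => [[|[|j]] Hj].
Qed.

Lemma Bm_sq : Bm *m Bm = Bm - (3/64)%:C *: 1%:M.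
Proof.
apply/matrixP => i j; rewrite !mxE !big_ord_recr big_ord0 /= !mxE.
case: i => [[|[|i]] Hi] //; case: j => [[|[|j]] Hj] //=; rewrite /bb /=; by field.
Qed.

Lemma MxE m n (phi : 'cV[C]_(m * n)) i j : Mx phi i j = phi (mxtens_index (i, j)) 0.
Proof. by rewrite mxE. Qed.

Lemma Mx2 : Mx (psi2 R : 'cV_(2 * 4)) *m adj (Mx (psi2 R : 'cV_(2 * 4))) = Bm.
Proof.
apply/matrixP => i j; rewrite !mxE.
under eq_bigr => k _ do rewrite adj_entry !MxE psi_pair.
rewrite -rmorph_sum !big_ord_recr big_ord0 /=.
case: i => [[|[|i]] Hi] //; case: j => [[|[|j]] Hj] //=; rewrite /bb /w /=;
  by congr (_%:C); field.
Qed.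
Lemma Mx4 : adj (Mx (psi2 R : 'cV_(4 * 2))) *m Mx (psi2 R : 'cV_(4 * 2)) = Bm.
Proof.
apply/matrixP => i j; rewrite !mxE.
under eq_bigr => k _ do rewrite adj_entry !MxE mulrC psi_pair.
rewrite -rmorph_sum !big_ord_recr big_ord0 /=.
case: i => [[|[|i]] Hi] //; case: j => [[|[|j]] Hj] //=; rewrite /bb /w /=;
  by congr (_%:C); field.
Qed.

Lemma Bm_tr : \tr Bm = 1.
Proof.
rewrite /mxtrace !big_ord_recr big_ord0 /= !mxE /bb /=.
have -> : (1 : C) = (1 : R)%:C by [].
by rewrite -!rmorphD; congr (_%:C); field.
Qed.

Lemma Bm_tr2 : \tr (Bm *m Bm) = (29/32)%:C.
Proof.
rewrite Bm_sq /mxtrace !big_ord_recr big_ord0 /= !mxE /bb /=.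
by field.
Qed.

Lemma XYXY (V : zmodType) (X Y : V) : X - Y - X + Y = 0.
Proof. by rewrite -addrA [- X + Y]addrC addrA subrK subrr. Qed.

Lemma vN_Bm : vN_entropy Bm = cval R.
Proof.
apply: vN_c; [exact: Bm_herm | | exact: Bm_tr | exact: Bm_tr2].
rewrite Bm_sq mulmxBl -scalemxAl mul1mx Bm_sq.
exact: XYXY.
Qed.

Lemma vN_MBm p (M : 'M[C]_(p, 2)) : adj M *m M = Bm -> vN_entropy (M *m adj M) = cval R.
Proof.
move=> H.
have e2 : (M *m adj M) *m (M *m adj M) = M *m Bm *m adj M.
  by rewrite mulmxA -(mulmxA M (adj M) M) H.
apply: vN_c.
- by rewrite adjM adjK.
- have e3 : (M *m Bm *m adj M) *m (M *m adj M) = M *m (Bm *m Bm) *m adj M.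
    by rewrite !mulmxA -[M *m Bm *m adj M *m M]mulmxA H.
  rewrite e2 e3 Bm_sq mulmxBr -scalemxAr mulmx1 mulmxBl -scalemxAl.
  exact: XYXY.
- by rewrite mxtrace_mulC H Bm_tr.
- by rewrite e2 mxtrace_mulC mulmxA H Bm_tr2.
Qed.
End Conc.
Lemma reidx7 s : (s = qord qA qB qC \/ s = qord qB qA qC \/ s = qord qC qA qB \/ s = qord qA qC qB \/ s = qord qB qC qA) ->
  forall j : 'I_8, (val (reidx s j) == 7%N) = (val j == 7%N).
Proof.
move=> Hs [m Hm]; rewrite /reidx !big_ord_recr big_ord0 /=.
do 8 (case: m Hm => [|m] Hm; [by case: Hs => [->|[->|[->|[->|->]]]]; rewrite inordK; vm_compute|]).
by move: Hm.
Qed.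

Lemma reorder_rho (R : realType) s : (s = qord qA qB qC \/ s = qord qB qA qC \/ s = qord qC qA qB \/ s = qord qA qC qB \/ s = qord qB qC qA) ->
  reorder s (rho2 R) = rho2 R.
Proof.
move=> Hs; apply/matrixP => i j; rewrite !mxE !big_ord1 !mxE.
by rewrite !(reidx7 Hs).
Qed.

Unset Implicit Arguments.
Theorem lemma2 (R : realType) :
  let c : R :=
    - ((4 + Num.sqrt 13) / 8) * log2 ((4 + Num.sqrt 13) / 8)
    - ((4 - Num.sqrt 13) / 8) * log2 ((4 - Num.sqrt 13) / 8) in
  (* D(B2C2|A2) *) discord (reorder (qord qA qB qC) (rho2 R) : 'M_(2 * 4)) = c /\
      (* D(A2C2|B2) *) discord (reorder (qord qB qA qC) (rho2 R) : 'M_(2 * 4)) = c /\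
      (* D(A2B2|C2) *) discord (reorder (qord qC qA qB) (rho2 R) : 'M_(2 * 4)) = c /\
      (* D(C2|A2B2) *) discord (reorder (qord qA qB qC) (rho2 R) : 'M_(4 * 2)) = c /\
      (* D(B2|A2C2) *) discord (reorder (qord qA qC qB) (rho2 R) : 'M_(4 * 2)) = c /\
    (* D(A2|B2C2) *) discord (reorder (qord qB qC qA) (rho2 R) : 'M_(4 * 2)) = c.
Proof.
move=> c.
have c24 : discord (rho2 R : 'M_(2 * 4)) = c.
  have := @discord_pure R 2 4 (psi2 R) (psi_norm R).
  rewrite /rho2 => ->; rewrite ptraceY_pure Mx2; exact: vN_Bm.
have c42 : discord (rho2 R : 'M_(4 * 2)) = c.
  have := @discord_pure R 4 2 (psi2 R) (psi_norm R).
  rewrite /rho2 => ->; rewrite ptraceY_pure; exact: vN_MBm (Mx4 R).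
rewrite !reorder_rho; try tauto.
Qed.
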